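(* There is no SSP group of $G(4,2)$-type. Consequently, if $G$ is a non-abelian SSP group of length $4$ with canonical basis $(a_1,\dots,a_4)$, then $\langle a_1,a_2,a_3\rangle$ is abelian and the cut-off point of $G$ is $3$.
   Context: Notation: $x^f$ is the image of $x$ under $f$; $[x,y]=x^{-1}y^{-1}xy$; $e$ is the identity. A triple $(G,H,f)$, where $H\le G$ and $f:H\to G$ is a homomorphism, is simple if the only subgroup $K\le H$ that is normal in $G$ and satisfies $K^f\le K$ is trivial. For such a triple put $G_0=G$, $H_0=H$, and for $k\ge1$, $G_k=(H_{k-1})^f$, $H_k=H\cap G_k$. Let $p$ be a prime or $\infty$. A polycyclic group $G$ is an SSP group with respect to $(G,H,f)$ if: (1) $f$ is injective; (2) each $(G_k,H_k,f|_{H_k})$ is a simple triple; (3) $H_k$ and $G_{k+1}$ are normal in $G_k$ and $G_k=H_kG_{k+1}$; (4) whenever $G_k$ is nontrivial, $G_k/H_k$ is cyclic of order $p$ (infinite cyclic if $p=\infty$). The length $n$ is the Hirsch length if $p=\infty$ and $\log_p|G|$ if $p$ is prime. A canonical basis of $G$ is a tuple $(a_1,\dots,a_n)$ with $a_1,\dots,a_{n-1}\in H$, $a_{i+1}=a_i^f$ for $1\le i\le n-1$, $G_i=\langle a_{i+1},\dots,a_n\rangle$ and $H_i=\langle a_{i+1},\dots,a_{n-1}\rangle$ for $0\le i\le n-1$. The cut-off point $c$ is the largest $s\in\{2,\dots,n\}$ with $[a_1,a_2]=\dots=[a_1,a_s]=e$; $G$ is then of $G(n,c)$-type. *)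

(* Defs.v *)
(* Abstract (possibly infinite) groups, since SSP groups with
   p = infinity are infinite polycyclic groups, which MathComp's finGroupType
   cannot represent. *)
From Stdlib Require Import ZArith List.

Set Implicit Arguments.
Unset Strict Implicit.

Record groupType := GroupType {
  gcar :> Type;
  gmul : gcar -> gcar -> gcar;
  ginv : gcar -> gcar;
  gone : gcar;
  gmulA : forall x y z, gmul x (gmul y z) = gmul (gmul x y) z;
  gmul1g : forall x, gmul gone x = x;
  gmulg1 : forall x, gmul x gone = x;
  gmulVg : forall x, gmul (ginv x) x = gone;
  gmulgV : forall x, gmul x (ginv x) = gone
}.

Section GroupDefs.
Variable G : groupType.
Local Notation "x * y" := (gmul x y).
Local Notation e := (gone G).

Fixpoint gpow (g : G) (n : nat) : G :=
  match n with 0 => e | S n => g * gpow g n end.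

Definition gpowz (g : G) (z : Z) : G :=
  match z with
  | Z0 => e
  | Zpos q => gpow g (Pos.to_nat q)
  | Zneg q => ginv (gpow g (Pos.to_nat q))
  end.

Definition gcomm (x y : G) : G := ginv x * (ginv y * (x * y)).

Definition subgroup (K : G -> Prop) : Prop :=
  K e /\ (forall x y, K x -> K y -> K (x * y)) /\ (forall x, K x -> K (ginv x)).

Definition subset (K L : G -> Prop) : Prop := forall x, K x -> L x.

Definition normal (K L : G -> Prop) : Prop :=
  subgroup K /\ subset K L /\
  forall x k, L x -> K k -> K (ginv x * (k * x)).

Definition trivial (K : G -> Prop) : Prop := forall x, K x -> x = e.

Definition gen (S : G -> Prop) (x : G) : Prop :=
  forall K, subgroup K -> subset S K -> K x.

Definition abelian (K : G -> Prop) : Prop :=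
  forall x y, K x -> K y -> x * y = y * x.

(* L / K is cyclic (K normal in L): generated by the coset of some g in L *)
Definition cyclic_factor (L K : G -> Prop) (g : G) : Prop :=
  L g /\ forall x, L x -> exists z : Z, K (gpowz g (- z) * x).

Definition cyclic_series (Ser : nat -> G -> Prop) (m : nat) : Prop :=
  (forall x, Ser 0 x) /\ trivial (Ser m) /\
  forall i, i < m ->
    subgroup (Ser i) /\ normal (Ser (S i)) (Ser i) /\
    exists g, cyclic_factor (Ser i) (Ser (S i)) g.

Definition polycyclic : Prop := exists Ser m, cyclic_series Ser m.

(* Hirsch length: number of infinite cyclic factors of a polycyclic series
   (the flags b record which factors are infinite) *)
Definition hirsch_length (n : nat) : Prop :=
  exists Ser m (b : list bool),
    cyclic_series Ser m /\ length b = m /\ count_occ Bool.bool_dec b true = n /\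
    forall i, i < m ->
      if nth i b false
      then exists g, cyclic_factor (Ser i) (Ser (S i)) g /\
                     forall z, Ser (S i) (gpowz g z) -> z = 0%Z
      else exists g (k : nat), cyclic_factor (Ser i) (Ser (S i)) g /\
                     0 < k /\ Ser (S i) (gpow g k).

Definition has_order (N : nat) : Prop :=
  exists l : list G, NoDup l /\ (forall x, In x l) /\ length l = N.

(* p : option nat ; Some q stands for the prime q, None stands for infinity *)
Definition valid_p (p : option nat) : Prop :=
  match p with
  | Some q => 2 <= q /\ forall d, 2 <= d -> (exists k, q = Nat.mul d k) -> d = q
  | None => True
  end.

Definition quotient_cyclic_of_order (L K : G -> Prop) (p : option nat) : Prop :=
  exists g, cyclic_factor L K g /\
    forall z : Z, K (gpowz g z) <->
      match p with
      | Some q => Z.divide (Z.of_nat q) z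
      | None => z = 0%Z
      end.

Variables (H : G -> Prop) (f : G -> G).

Fixpoint Gk (k : nat) : G -> Prop :=
  match k with
  | 0 => fun _ => True
  | S k => fun y => exists x, H x /\ Gk k x /\ f x = y
  end.

Definition Hk (k : nat) (x : G) : Prop := H x /\ Gk k x.

Definition simple_triple (L K : G -> Prop) : Prop :=
  forall N, subgroup N -> subset N K -> normal N L ->
    (forall x, N x -> N (f x)) -> trivial N.

Definition SSP (p : option nat) : Prop :=
  polycyclic /\ subgroup H /\
  (forall x y, H x -> H y -> f (x * y) = f x * f y) /\
  (forall x y, H x -> H y -> f x = f y -> x = y) /\
  (forall k, simple_triple (Gk k) (Hk k)) /\
  (forall k, normal (Hk k) (Gk k) /\ normal (Gk (S k)) (Gk k) /\
               forall x, Gk k x <->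
                 exists h g, Hk k h /\ Gk (S k) g /\ x = h * g) /\
  (forall k, (exists x, Gk k x /\ x <> e) ->
               quotient_cyclic_of_order (Gk k) (Hk k) p).

Definition ssp_length (p : option nat) (n : nat) : Prop :=
  match p with
  | Some q => has_order (Nat.pow q n)
  | None => hirsch_length n
  end.

Definition canonical_basis (n : nat) (a : nat -> G) : Prop :=
  (forall i, 1 <= i <= n - 1 -> H (a i)) /\
  (forall i, 1 <= i <= n - 1 -> a (S i) = f (a i)) /\
  (forall i, i <= n - 1 ->
     forall x, Gk i x <-> gen (fun y => exists j, S i <= j <= n /\ y = a j) x) /\
  (forall i, i <= n - 1 ->
     forall x, Hk i x <-> gen (fun y => exists j, S i <= j <= n - 1 /\ y = a j) x).

End GroupDefs.

Definition cutoff (G : groupType) (n : nat) (a : nat -> G) (c : nat) : Prop :=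
  2 <= c <= n /\
  (forall j, 2 <= j <= c -> gcomm (a 1) (a j) = gone G) /\
  (forall s, c < s <= n -> ~ (forall j, 2 <= j <= s -> gcomm (a 1) (a j) = gone G)).

(* Main.v *)
Require Import Defs.
From Stdlib Require Import ZArith List.
From Stdlib Require Import Lia Znumtheory Classical.
Open Scope nat_scope.

Section Lemmas.
Context {G : groupType}.
Local Notation "x * y" := (gmul x y).
Local Notation e := (gone G).
Implicit Types x y z : G.

Lemma mulKg x y : ginv x * (x * y) = y.
Proof. rewrite gmulA, gmulVg, gmul1g. reflexivity. Qed.
Lemma mulVKg x y : x * (ginv x * y) = y.
Proof. rewrite gmulA, gmulgV, gmul1g. reflexivity. Qed.
Lemma mul_cancel_l x y z : x * y = x * z -> y = z.
Proof. intro H. rewrite <- (mulKg x y), <- (mulKg x z), H. reflexivity. Qed.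
Lemma inv_uniq x y : x * y = e -> y = ginv x.
Proof. intro H. apply (mul_cancel_l x). rewrite H, gmulgV. reflexivity. Qed.
Lemma ginv_mul x y : ginv (x * y) = ginv y * ginv x.
Proof. symmetry. apply inv_uniq. rewrite <- gmulA, (gmulA y), gmulgV, gmul1g, gmulgV. reflexivity. Qed.
Lemma ginv_inv x : ginv (ginv x) = x.
Proof. symmetry. apply inv_uniq. apply gmulVg. Qed.
Lemma ginv_one : ginv e = e.
Proof. symmetry. apply inv_uniq. apply gmul1g. Qed.
End Lemmas.

Ltac gsimpl := repeat first [ rewrite ginv_mul | rewrite ginv_inv | rewrite ginv_one
  | rewrite <- gmulA | rewrite mulKg | rewrite mulVKg | rewrite gmulVg | rewrite gmulgV
  | rewrite gmul1g | rewrite gmulg1 ].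

Section Lemmas2.
Context {G : groupType}.
Local Notation "x * y" := (gmul x y).
Local Notation e := (gone G).
Implicit Types x y g : G.

Definition commute x y := x * y = y * x.

Lemma commute_sym x y : commute x y -> commute y x.
Proof. unfold commute; auto. Qed.

Lemma gcomm_e x y : gcomm x y = e -> commute x y.
Proof. unfold gcomm, commute. intro H.
  transitivity (y * x * gcomm x y).
  - unfold gcomm. gsimpl. reflexivity.
  - unfold gcomm. rewrite H, gmulg1. reflexivity. Qed.
Lemma e_gcomm x y : commute x y -> gcomm x y = e.
Proof. unfold gcomm, commute. intro H. rewrite H. gsimpl. reflexivity. Qed.

Lemma sg_e K : subgroup K -> K e.
Proof. intros [? _]; auto. Qed.
Lemma sg_mul K x y : subgroup K -> K x -> K y -> K (x * y).
Proof. intros (_ & ? & _); auto. Qed.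
Lemma sg_inv K x : subgroup K -> K x -> K (ginv x).
Proof. intros (_ & _ & ?); auto. Qed.

Lemma subgroup_cent x : subgroup (commute x).
Proof. unfold commute; split; [|split].
 - rewrite gmulg1, gmul1g; reflexivity.
 - intros y z Hy Hz. rewrite gmulA, Hy, <- gmulA, Hz, gmulA. reflexivity.
 - intros y Hy. apply (mul_cancel_l y). rewrite gmulA, <- Hy. gsimpl. reflexivity.
Qed.

Lemma subgroup_all : subgroup (fun _ : G => True).
Proof. repeat split. Qed.
Lemma subgroup_triv : subgroup (fun u : G => u = e).
Proof. split; [|split]; intros; subst; gsimpl; reflexivity. Qed.

Lemma gen_min (S K : G -> Prop) : subgroup K -> (forall x, S x -> K x) -> forall x, gen S x -> K x.
Proof. intros HK HS x Hx. apply Hx; auto. Qed.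
Lemma gen_in (S : G -> Prop) x : S x -> gen S x.
Proof. intros Hx K _ HS. apply HS, Hx. Qed.

Lemma abelian_gen (S : G -> Prop) : (forall x y, S x -> S y -> commute x y) -> abelian (gen S).
Proof. intros HS x y Hx Hy.
  assert (Hy' : forall u, S u -> commute y u).
  { intros u Hu. apply commute_sym. apply (gen_min S (commute u)); auto using subgroup_cent. }
  apply (gen_min S (commute y)) in Hx; auto using subgroup_cent.

Qed.

Lemma commute_inv x y : commute x y -> commute (ginv x) y.
Proof. intro H. apply commute_sym. apply (sg_inv (commute y)); auto using subgroup_cent, commute_sym. Qed.

Lemma gpow_in K g n : subgroup K -> K g -> K (gpow g n).
Proof. intros HK Hg. induction n; simpl. apply sg_e; auto. apply sg_mul; auto. Qed.
Lemma gpow_add g n m : gpow g (n + m) = gpow g n * gpow g m.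
Proof. induction n; simpl. rewrite gmul1g; reflexivity. rewrite IHn, gmulA; reflexivity. Qed.
Lemma gpow_Sr g n : gpow g (S n) = gpow g n * g.
Proof. replace (S n) with (n + 1)%nat by lia. rewrite gpow_add. simpl. rewrite gmulg1. reflexivity. Qed.
Lemma gpow_comm g n m : commute (gpow g n) (gpow g m).
Proof. unfold commute. rewrite <- !gpow_add, Nat.add_comm. reflexivity. Qed.

Lemma gpowz_nat g n : gpowz g (Z.of_nat n) = gpow g n.
Proof. destruct n. reflexivity. simpl. rewrite SuccNat2Pos.id_succ. reflexivity. Qed.
Lemma gpowz_negnat g n : gpowz g (- Z.of_nat n) = ginv (gpow g n).
Proof. destruct n. simpl. rewrite ginv_one. reflexivity. simpl. rewrite SuccNat2Pos.id_succ. reflexivity. Qed.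

Lemma gpowz_F g n m : gpowz g (Z.of_nat n - Z.of_nat m) = gpow g n * ginv (gpow g m).
Proof. revert m. induction n; intros m.
 - replace (Z.of_nat 0 - Z.of_nat m)%Z with (- Z.of_nat m)%Z by lia.
   rewrite gpowz_negnat. simpl. rewrite gmul1g. reflexivity.
 - destruct m.
   + replace (Z.of_nat (S n) - Z.of_nat 0)%Z with (Z.of_nat (S n)) by lia.
     rewrite gpowz_nat. simpl (gpow g 0). rewrite ginv_one, gmulg1. reflexivity.
   + replace (Z.of_nat (S n) - Z.of_nat (S m))%Z with (Z.of_nat n - Z.of_nat m)%Z by lia.
     rewrite IHn, !gpow_Sr. gsimpl. reflexivity.
Qed.

Lemma Zdecomp (z : Z) : exists n m, z = (Z.of_nat n - Z.of_nat m)%Z.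
Proof. exists (Z.to_nat z), (Z.to_nat (- z)). lia. Qed.
Lemma Zcases (z : Z) : exists n, z = Z.of_nat n \/ z = (- Z.of_nat n)%Z.
Proof. exists (Z.abs_nat z). lia. Qed.

Lemma gpowz_add g a b : gpowz g (a + b) = gpowz g a * gpowz g b.
Proof.
  destruct (Zdecomp a) as (n1 & m1 & ->). destruct (Zdecomp b) as (n2 & m2 & ->).
  replace (Z.of_nat n1 - Z.of_nat m1 + (Z.of_nat n2 - Z.of_nat m2))%Z
    with (Z.of_nat (n1 + n2) - Z.of_nat (m1 + m2))%Z by lia.
  rewrite !gpowz_F, !gpow_add. gsimpl. f_equal.
  assert (C1 : commute (ginv (gpow g m1)) (gpow g n2)) by (apply commute_inv, gpow_comm).
  assert (C2 : commute (ginv (gpow g m2)) (ginv (gpow g m1))).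
  { apply commute_inv, commute_sym, commute_inv, gpow_comm. }
  rewrite (gmulA (ginv (gpow g m1))), C1, <- gmulA, C2. reflexivity.
Qed.

Lemma gpowz_zero g : gpowz g 0 = e.
Proof. reflexivity. Qed.
Lemma gpowz_one g : gpowz g 1 = g.
Proof. simpl. apply gmulg1. Qed.

Lemma gpowz_inv g z : ginv (gpowz g z) = gpowz g (- z).
Proof. symmetry. apply inv_uniq. rewrite <- gpowz_add, Z.add_opp_diag_r. reflexivity. Qed.

Lemma gpowz_comm g a b : commute (gpowz g a) (gpowz g b).
Proof. unfold commute. rewrite <- !gpowz_add, Z.add_comm. reflexivity. Qed.

Lemma gpowz_mul g a b : gpowz g (a * b) = gpowz (gpowz g a) b.
Proof.
  assert (Hn : forall n, gpowz g (a * Z.of_nat n) = gpow (gpowz g a) n).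
  { induction n. rewrite Z.mul_0_r. reflexivity.
    replace (a * Z.of_nat (S n))%Z with (a + a * Z.of_nat n)%Z by lia.
    rewrite gpowz_add, IHn. reflexivity. }
  destruct (Zcases b) as (n & [-> | ->]).
  - rewrite Hn, gpowz_nat. reflexivity.
  - replace (a * - Z.of_nat n)%Z with (- (a * Z.of_nat n))%Z by lia.
    rewrite <- gpowz_inv, Hn, gpowz_negnat. reflexivity.
Qed.

Lemma gpowz_in K g z : subgroup K -> K g -> K (gpowz g z).
Proof. intros HK Hg. destruct (Zcases z) as (n & [-> | ->]).
  rewrite gpowz_nat; apply gpow_in; auto.
  rewrite gpowz_negnat; apply sg_inv; auto; apply gpow_in; auto. Qed.

Lemma commute_powz x y z : commute x y -> commute x (gpowz y z).
Proof. intro H. apply (gpowz_in (commute x)); auto using subgroup_cent. Qed.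

Lemma hom_powz (phi : G -> G) (K : G -> Prop) g z : subgroup K ->
  (forall x y, K x -> K y -> phi (x * y) = phi x * phi y) -> K g ->
  phi (gpowz g z) = gpowz (phi g) z.
Proof. intros HK Hphi Hg.
  assert (He : phi e = e).
  { apply (mul_cancel_l (phi e)). rewrite (gmulg1 (phi e)), <- Hphi by (apply sg_e; auto).
    rewrite gmulg1. reflexivity. }
  assert (Hn : forall n, phi (gpow g n) = gpow (phi g) n).
  { induction n; simpl; auto. rewrite Hphi, IHn; auto. apply gpow_in; auto. }
  destruct (Zcases z) as (n & [-> | ->]).
  - rewrite !gpowz_nat; auto.
  - rewrite !gpowz_negnat, <- Hn. apply inv_uniq.
    rewrite <- Hphi, gmulgV; auto. apply gpow_in; auto. apply sg_inv; auto; apply gpow_in; auto.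
Qed.

Lemma powz_mul_comm x y z : commute x y -> gpowz (x * y) z = gpowz x z * gpowz y z.
Proof. intro H.
  assert (Hc : forall n, commute (gpow x n) (gpow y n)).
  { intro n. apply (gpow_in (commute (gpow x n))); auto using subgroup_cent.
    apply commute_sym. apply (gpow_in (commute y)); auto using subgroup_cent, commute_sym. }
  assert (Hn : forall n, gpow (x * y) n = gpow x n * gpow y n).
  { induction n; simpl. rewrite gmulg1; reflexivity.
    rewrite IHn. gsimpl. f_equal.
    assert (C : commute y (gpow x n)).
    { apply (gpow_in (commute y)); auto using subgroup_cent, commute_sym. }
    rewrite gmulA, C. gsimpl. reflexivity. }
  destruct (Zcases z) as (n & [-> | ->]).
  - rewrite !gpowz_nat; auto.
  - rewrite !gpowz_negnat, Hn, (Hc n), ginv_mul. reflexivity.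
Qed.

End Lemmas2.

Lemma valid_prime q : valid_p (Some q) -> prime (Z.of_nat q).
Proof. intros [H2 Hd]. apply prime_alt. split. lia.
  intros n Hn [k Hk].
  assert (Hk0 : (0 < k)%Z) by nia.
  assert (Z.to_nat n = q).
  { apply Hd. lia. exists (Z.to_nat k). apply Nat2Z.inj. rewrite Nat2Z.inj_mul, !Z2Nat.id by lia. lia. }
  lia.
Qed.

Lemma gpowz_e {G : groupType} z : gpowz (gone G) z = gone G.
Proof. assert (forall n, gpow (gone G) n = gone G) by (induction n; simpl; [reflexivity| rewrite IHn, gmul1g; reflexivity]).
  destruct (Zcases z) as (n & [-> | ->]). rewrite gpowz_nat; auto. rewrite gpowz_negnat, H, ginv_one; auto. Qed.

Lemma gen_range_in {G : groupType} (a : nat -> G) lo hi j : lo <= j <= hi ->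
  gen (fun y => exists j, lo <= j <= hi /\ y = a j) (a j).
Proof. intro Hj. apply gen_in. exists j; split; auto. Qed.

Lemma gen_range_min {G : groupType} (a : nat -> G) lo hi (K : G -> Prop) : subgroup K ->
  (forall j, lo <= j <= hi -> K (a j)) -> forall x, gen (fun y => exists j, lo <= j <= hi /\ y = a j) x -> K x.
Proof. intros HK Hj. apply gen_min; auto. intros y (j & Hj' & ->). auto. Qed.

Lemma gen_e {G : groupType} (S : G -> Prop) : gen S (gone G).
Proof. intros K HK _. apply sg_e; auto. Qed.

Theorem mainTheorem9 :
  forall (p : option nat) (G : groupType) (H : G -> Prop) (f : G -> G)
         (a : nat -> G),
    valid_p p ->
    SSP H f p ->
    ssp_length G p 4 ->
    canonical_basis H f 4 a ->
    (* no SSP group of G(4,2)-type *)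
    ~ cutoff 4 a 2 /\
    (* non-abelian case: <a1,a2,a3> abelian and cut-off point 3 *)
    (~ abelian (fun _ : G => True) ->
       abelian (gen (fun y => y = a 1 \/ y = a 2 \/ y = a 3)) /\ cutoff 4 a 3).
Proof.
  intros p G H f a Hp Hssp Hlen Hcb.
  destruct Hssp as (_ & HH & Hhom & Hinj & _ & H3 & H4).
  destruct Hcb as (CBH & CBf & CBG & CBHk).
  assert (aH : forall i, 1 <= i <= 3 -> H (a i)) by (intros; apply CBH; lia).
  assert (af : forall i, 1 <= i <= 3 -> a (S i) = f (a i)) by (intros; apply CBf; lia).
  assert (Gin : forall i j, i <= 3 -> S i <= j <= 4 -> Gk H f i (a j)).
  { intros i j Hi Hj. apply (proj2 (CBG i ltac:(lia) _)). apply gen_range_in; lia. }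
  assert (Hin : forall i j, i <= 3 -> S i <= j <= 3 -> Hk H f i (a j)).
  { intros i j Hi Hj. apply (proj2 (CBHk i ltac:(lia) _)). apply gen_range_in; lia. }
  assert (Gsub : forall i x, i <= 3 -> Gk H f i x -> forall K, subgroup K ->
            (forall j, S i <= j <= 4 -> K (a j)) -> K x).
  { intros i x Hi Hx K HK Hj. apply (proj1 (CBG i ltac:(lia) x)) in Hx.
    exact (gen_range_min a _ _ K HK Hj x Hx). }
  assert (Hsub : forall i x, i <= 3 -> Hk H f i x -> forall K, subgroup K ->
            (forall j, S i <= j <= 3 -> K (a j)) -> K x).
  { intros i x Hi Hx K HK Hj. apply (proj1 (CBHk i ltac:(lia) x)) in Hx.
    exact (gen_range_min a _ _ K HK Hj x Hx). }
  assert (H3triv : forall x, Hk H f 3 x -> x = gone G).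
  { intros x Hx. apply (Hsub 3 x ltac:(lia) Hx (fun u => u = gone G)).
    apply subgroup_triv. intros; lia. }
  assert (H3e : Hk H f 3 (gone G)).
  { apply (proj2 (CBHk 3 ltac:(lia) _)). apply gen_e. }
  assert (fe : f (gone G) = gone G).
  { apply (mul_cancel_l (f (gone G))). rewrite (gmulg1 (f (gone G))), <- Hhom by (apply sg_e; auto).
    rewrite gmulg1. reflexivity. }
  assert (finv : forall x, H x -> f (ginv x) = ginv (f x)).
  { intros x Hx. apply inv_uniq. rewrite <- Hhom, gmulgV; auto. apply sg_inv; auto. }
  assert (fcomm : forall x y, H x -> H y -> f (gcomm x y) = gcomm (f x) (f y)).
  { intros x y Hx Hy. unfold gcomm.
    assert (Hxi : H (ginv x)) by (apply sg_inv; auto).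
    assert (Hyi : H (ginv y)) by (apply sg_inv; auto).
    assert (Hxy : H (gmul x y)) by (apply sg_mul; auto).
    rewrite (Hhom (ginv x)), (Hhom (ginv y)), (Hhom x y), !finv; auto.
    all: repeat (apply sg_mul; auto). }
  assert (Hcomm : forall x y, H x -> H y -> H (gcomm x y)).
  { intros x y Hx Hy. unfold gcomm. repeat (apply sg_mul; auto); apply sg_inv; auto. }
  assert (finj_e : forall x, H x -> f x = gone G -> x = gone G).
  { intros x Hx Hfx. apply Hinj; auto. apply sg_e; auto. rewrite fe; auto. }
  destruct (H3 2) as ((sgH2 & _ & cjH2) & (sgG3 & _ & cjG3) & _).
  assert (cA2 : Hk H f 2 (gcomm (a 3) (a 4))).
  { unfold gcomm. apply sg_mul; auto. apply sg_inv; auto. all: try (apply Hin; lia).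
    all: try (apply cjH2). all: try (apply Gin; lia); try (apply Hin; lia). }
  assert (cA3 : Gk H f 3 (gcomm (a 3) (a 4))).
  { replace (gcomm (a 3) (a 4)) with (gmul (gmul (ginv (a 3)) (gmul (ginv (a 4)) (a 3))) (a 4))
      by (unfold gcomm; gsimpl; reflexivity).
    apply sg_mul; auto. all: try apply cjG3. all: try (apply Gin; lia). all: apply sg_inv; auto; apply Gin; lia. }
  assert (cA : gcomm (a 3) (a 4) = gone G).
  { apply H3triv. split; auto. apply cA2. }
  assert (c34 : commute (a 3) (a 4)) by (apply gcomm_e; auto).
  assert (c23 : commute (a 2) (a 3)).
  { apply gcomm_e, finj_e. apply Hcomm; apply aH; lia.
    rewrite fcomm, <- !af; auto; try lia; apply aH; lia. }
  assert (c12 : commute (a 1) (a 2)).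
  { apply gcomm_e, finj_e. apply Hcomm; apply aH; lia.
    rewrite fcomm, <- !af, e_gcomm; auto; try lia; apply aH; lia. }
  destruct (H3 1) as ((sgH1 & _ & cjH1) & (sgG2 & _ & cjG2) & _).
  destruct (H3 0) as ((sgH0 & _ & cjH0) & (sgG1 & _ & cjG1) & _).
  set (y := gcomm (a 2) (a 4)).
  assert (yH1 : Hk H f 1 y).
  { unfold y, gcomm. apply sg_mul; auto. apply sg_inv; auto. all: try (apply Hin; lia).
    all: try (apply cjH1). all: try (apply Gin; lia); try (apply Hin; lia). }
  assert (yG2 : Gk H f 2 y).
  { unfold y. replace (gcomm (a 2) (a 4)) with (gmul (gmul (ginv (a 2)) (gmul (ginv (a 4)) (a 2))) (a 4))
      by (unfold gcomm; gsimpl; reflexivity).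
    apply sg_mul; auto. all: try apply cjG2. all: try (apply Gin; lia). all: apply sg_inv; auto; apply Gin; lia. }
  assert (yH2 : Hk H f 2 y) by (split; auto; apply yH1).
  destruct (Hsub 2 y ltac:(lia) yH2 (fun u => exists m, u = gpowz (a 3) m)) as (m & ym).
  { split; [|split].
    - exists 0%Z. reflexivity.
    - intros u v (m1 & ->) (m2 & ->). exists (m1 + m2)%Z. rewrite gpowz_add. reflexivity.
    - intros u (m1 & ->). exists (- m1)%Z. rewrite gpowz_inv. reflexivity. }
  { intros j Hj. assert (j = 3) by lia. subst j. exists 1%Z. rewrite gpowz_one. reflexivity. }
  set (x := gcomm (a 1) (a 3)).
  assert (xm : x = gpowz (a 2) m).
  { apply Hinj. apply Hcomm; apply aH; lia. apply gpowz_in; auto; apply aH; lia.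
    unfold x. rewrite fcomm, <- !af; try lia; try (apply aH; lia).
    fold y. rewrite ym. rewrite (hom_powz f H); auto. all: try (rewrite <- af; auto; lia). all: try (apply aH; lia). }
  assert (cent3 : forall u, Gk H f 1 u -> commute (a 3) u).
  { intros u Hu. apply (Gsub 1 u ltac:(lia) Hu); auto using subgroup_cent.
    intros j Hj. assert (j = 2 \/ j = 3 \/ j = 4) as [-> | [-> | ->]] by lia.
    apply commute_sym; auto. reflexivity. auto. }
  assert (cent2 : forall u, Hk H f 1 u -> commute (a 2) u).
  { intros u Hu. apply (Hsub 1 u ltac:(lia) Hu); auto using subgroup_cent.
    intros j Hj. assert (j = 2 \/ j = 3) as [-> | ->] by lia.
    reflexivity. auto. }
  set (h := gcomm (a 4) (a 1)).
  assert (hH1 : Hk H f 1 h).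
  { split.
    - unfold h. replace (gcomm (a 4) (a 1)) with (gmul (gmul (ginv (a 4)) (gmul (ginv (a 1)) (a 4))) (a 1))
        by (unfold gcomm; gsimpl; reflexivity).
      apply sg_mul; auto. all: try (apply aH; lia).
      all: try (apply (cjH0 (a 4) (ginv (a 1))); [exact I| split; [apply sg_inv; auto; apply aH; lia | exact I]]).
    - unfold h, gcomm. apply sg_mul; auto. all: try (apply sg_inv; auto; apply Gin; lia).
      all: try (apply cjG1; [exact I | apply Gin; lia]). }
  assert (H1G1 : forall u, Hk H f 1 u -> Gk H f 1 u) by (intros u Hu; apply Hu).
  assert (xH1 : Hk H f 1 x) by (rewrite xm; apply gpowz_in; auto; apply Hin; lia).
  assert (C6 : commute (gmul (a 3) (ginv x)) (gmul (a 4) h)).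
  { replace (gmul (a 3) (ginv x)) with (gmul (ginv (a 1)) (gmul (a 3) (a 1)))
      by (unfold x, gcomm; gsimpl; reflexivity).
    replace (gmul (a 4) h) with (gmul (ginv (a 1)) (gmul (a 4) (a 1)))
      by (unfold h, gcomm; gsimpl; reflexivity).
    unfold commute. gsimpl. rewrite (gmulA (a 3) (a 4)), c34, <- gmulA. reflexivity. }
  assert (a4hG1 : Gk H f 1 (gmul (a 4) h)).
  { apply sg_mul; auto. all: try (apply Gin; lia). }
  assert (C7 : commute (ginv x) (gmul (a 4) h)).
  { apply commute_sym. replace (ginv x) with (gmul (ginv (a 3)) (gmul (a 3) (ginv x))) by (gsimpl; reflexivity).
    apply (sg_mul (commute (gmul (a 4) h))); auto using subgroup_cent.
    apply (sg_inv (commute (gmul (a 4) h))); auto using subgroup_cent.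
    all: apply commute_sym; auto. }
  assert (C8 : commute (ginv x) h).
  { apply commute_sym. apply (sg_inv (commute h)); auto using subgroup_cent. rewrite xm.
    apply commute_powz. apply commute_sym; auto. }
  assert (C9 : commute x (a 4)).
  { assert (commute (ginv x) (a 4)).
    { replace (a 4) with (gmul (gmul (a 4) h) (ginv h)) by (gsimpl; reflexivity).
      apply (sg_mul (commute (ginv x))); auto using subgroup_cent. apply (sg_inv (commute (ginv x))); auto using subgroup_cent. }
    apply commute_sym. rewrite <- (ginv_inv x). apply (sg_inv (commute (a 4))); auto using subgroup_cent.
    apply commute_sym; auto. }
  assert (c2y : commute (a 2) y) by (rewrite ym; apply commute_powz; auto).
  assert (Hphi : forall u v, True -> True ->
     gmul (ginv (a 4)) (gmul (gmul u v) (a 4)) =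
     gmul (gmul (ginv (a 4)) (gmul u (a 4))) (gmul (ginv (a 4)) (gmul v (a 4)))).
  { intros u v _ _. gsimpl. reflexivity. }
  assert (E1 : gmul (ginv (a 4)) (gmul x (a 4)) = x) by (rewrite C9; gsimpl; reflexivity).
  assert (E2 : gmul (ginv (a 4)) (gmul (a 2) (a 4)) = gmul (a 2) y) by (unfold y, gcomm; gsimpl; reflexivity).
  pose proof (hom_powz (fun u => gmul (ginv (a 4)) (gmul u (a 4))) (fun _ => True) (a 2) m
     (subgroup_all) Hphi I) as HP. cbv beta in HP.
  rewrite <- xm, E1, E2, powz_mul_comm in HP by exact c2y.
  rewrite <- xm in HP.
  assert (a33 : gpowz (a 3) (m * m) = gone G).
  { rewrite gpowz_mul, <- ym. apply (mul_cancel_l x). rewrite <- HP, gmulg1. reflexivity. }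
  assert (f3 : f (a 3) = a 4) by (symmetry; apply af; lia).
  assert (f2 : f (a 2) = a 3) by (symmetry; apply af; lia).
  assert (a44 : gpowz (a 4) (m * m) = gone G).
  { rewrite <- f3, <- (hom_powz f H), a33, fe; auto. all: try (apply aH; lia). }
  assert (a4m : gpowz (a 4) m = gone G).
  { destruct (classic (a 4 = gone G)) as [E|E]. rewrite E, gpowz_e. reflexivity.
    destruct (H4 3) as (g & (Gg & cf) & Hiff).
    { exists (a 4); split; [apply Gin; lia | exact E]. }
    destruct (cf (a 4) ltac:(apply Gin; lia)) as (z & Hz). apply H3triv in Hz.
    apply inv_uniq in Hz. rewrite gpowz_inv, Z.opp_involutive in Hz.
    rewrite Hz, <- gpowz_mul in a44 |- *.
    apply H3triv. apply Hiff.
    pose proof (proj1 (Hiff (z * (m*m))%Z) ltac:(rewrite a44; exact H3e)) as D.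
    destruct p as [q|]; simpl in *.
    - apply valid_prime in Hp. apply prime_mult in D; auto. destruct D as [D|D].
      + apply Z.divide_mul_l; auto.
      + apply prime_mult in D; auto. destruct D as [D|D]; apply Z.divide_mul_r; auto.
    - apply Z.mul_eq_0 in D. destruct D as [D|D]; [rewrite D; ring|]. apply Z.mul_eq_0 in D. destruct D as [D|D]; rewrite D; ring. }
  assert (a3m : gpowz (a 3) m = gone G).
  { apply finj_e. apply gpowz_in; auto; apply aH; lia.
    rewrite (hom_powz f H), f3; auto. all: try (apply aH; lia). }
  assert (a2m : gpowz (a 2) m = gone G).
  { apply finj_e. apply gpowz_in; auto; apply aH; lia.
    rewrite (hom_powz f H), f2; auto. all: try (apply aH; lia). }
  assert (c13 : commute (a 1) (a 3)) by (apply gcomm_e; fold x; rewrite xm; auto).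
  assert (c24 : commute (a 2) (a 4)) by (apply gcomm_e; fold y; rewrite ym; auto).
  split.
  - intros (_ & _ & Hs). apply (Hs 3). lia.
    intros j Hj. assert (j = 2 \/ j = 3) as [-> | ->] by lia; apply e_gcomm; auto.
  - intros Hnab. split.
    + apply abelian_gen. intros u v Hu Hv.
      destruct Hu as [-> | [-> | ->]]; destruct Hv as [-> | [-> | ->]];
        first [reflexivity | assumption | apply commute_sym; assumption].
    + split. lia. split.
      * intros j Hj. assert (j = 2 \/ j = 3) as [-> | ->] by lia; apply e_gcomm; auto.
      * intros s Hs Hall. assert (s = 4) by lia. subst s.
        assert (c14 : commute (a 1) (a 4)) by (apply gcomm_e, Hall; lia).
        apply Hnab. intros u v _ _.
        pose proof (proj1 (CBG 0 ltac:(lia) u) I) as Hu.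
        pose proof (proj1 (CBG 0 ltac:(lia) v) I) as Hv.
        refine (abelian_gen _ _ u v Hu Hv).
        intros u' v' (j & Hj & ->) (k & Hk & ->).
        assert (j = 1 \/ j = 2 \/ j = 3 \/ j = 4) as [-> | [-> | [-> | ->]]] by lia;
        assert (k = 1 \/ k = 2 \/ k = 3 \/ k = 4) as [-> | [-> | [-> | ->]]] by lia;
        first [reflexivity | assumption | apply commute_sym; assumption].
Qed.
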